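(* Let $(E,\pi,M)$ be a bundle with connection $\Delta^h$, let $\{u^I\}$ be bundle coordinates on an open set $W\subseteq E$, let $\{X_I\}$ be the frame adapted to $\{\partial/\partial u^I\}$ and $\Gamma_\mu^a$ the coefficients of $\Delta^h$ in it. Let $V\subseteq W$ be open and $U\subseteq V$, and suppose the normal coordinates equation $$\Big(\frac{\partial\tilde u^a}{\partial u^b}\Gamma_\mu^b+\frac{\partial\tilde u^a}{\partial u^\mu}\Big)\Big|_U=0$$ has solutions. Then all frames $\{\tilde X_I\}$ normal on $U$ and adapted to (the coordinate frames of) local bundle coordinates defined on $V$ are described by $$\tilde X_\mu|_U=(A_\mu^\nu X_\nu)|_U=\frac{\partial}{\partial\tilde u^\mu}\Big|_U,\qquad \tilde X_a|_U=(A_a^bX_b)|_U=\frac{\partial}{\partial\tilde u^a}\Big|_U,$$ where $\{\tilde u^I\}$ are bundle coordinates with domain $V$ whose fibre components $\tilde u^a$ are solutions of the normal coordinates equation above, $\{\tilde X_I\}$ is the frame adapted to $\{\partial/\partial\tilde u^I\}$, and $A_I^J=\partial u^J/\partial\tilde u^I$.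
   Context: $\dim M=n$, fibre dimension $r$; indices $\mu,\nu$ over $1,\dots,n$, $a,b$ over $n+1,\dots,n+r$, $I,J$ over $1,\dots,n+r$; summation convention. Bundle coordinates on open $U\subseteq E$: coordinates $\{u^I\}$ with $u^\mu=x^\mu\circ\pi$ for coordinates $\{x^\mu\}$ on $\pi(U)$; admissible changes have $\tilde u^\mu$ depending only on $u^1,\dots,u^n$. Vertical distribution $\Delta^v_p=T_p(\pi^{-1}(\pi(p)))$; a connection is an $n$-dimensional distribution $\Delta^h$ with $\Delta^v_p\oplus\Delta^h_p=T_p(E)$. The frame adapted to $\{e_I\}$ (with $\{e_a\}$ a basis of $\Delta^v$) is $X_\mu=(\pi_*|_{\Delta^h})^{-1}\pi_*(e_\mu)$, $X_a=e_a$; then $X_\mu=e_\mu+\Gamma_\mu^be_b$ defines the coefficients $\Gamma_\mu^a$. An adapted frame is normal on $U$ if its coefficients vanish on $U$. *)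

(* Defs.v *)
(* Everything is expressed in the bundle chart
   {u^I} on W: W is identified with the open set Wc = u(W) of R^(n+r)
   (row vectors 'rV[R]_(n+r)); first n coordinates = base coordinates u^mu,
   last r coordinates = fibre coordinates u^a. *)
From HB Require Import structures.
From mathcomp Require Import all_boot all_order all_algebra.
From mathcomp Require Import all_classical all_reals all_analysis.
Set Implicit Arguments. Unset Strict Implicit. Unset Printing Implicit Defensive.
Import Order.TTheory GRing.Theory Num.Theory.
Import numFieldNormedType.Exports.
Local Open Scope classical_set_scope.
Local Open Scope ring_scope.

(* standard basis vector e_I = d/du^I (in u-components) *)
Definition ebas (R : realType) (k : nat) (I : 'I_k) : 'rV[R]_k := delta_mx 0 I.

Fixpoint iterD (R : realType) (V W : normedModType R) (vs : seq V) (f : V -> W)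
  : V -> W :=
  match vs with
  | [::] => f
  | v :: vs' => (fun x => 'D_v (iterD vs' f) x)
  end.

Definition smooth_on (R : realType) (V W : normedModType R) (A : set V) (f : V -> W) :=
  forall (vs : seq V) (p : V), A p -> differentiable (iterD vs f) p.

(* Jacobian: (jac f p) I J = d f^J / d u^I at p *)
Definition jac (R : realType) (k : nat) (f : 'rV[R]_k -> 'rV[R]_k) (p : 'rV[R]_k)
  : 'M[R]_k := \matrix_(I, J) ('D_(ebas R I) f p) 0 J.

(* bundle coordinates {ut^I} with domain V, expressed through the u-chart:
   a diffeomorphism of V onto an open set whose base components ut^mu are
   x~^mu o pi for coordinates x~ on pi(V), i.e. they depend only (and
   injectively) on u^1..u^n. *)
Definition bundle_coords (R : realType) (n r : nat) (V : set 'rV[R]_(n + r))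
    (ut : 'rV[R]_(n + r) -> 'rV[R]_(n + r)) : Prop :=
  [/\ open V, smooth_on V ut,
      (forall p q, V p -> V q -> ut p = ut q -> p = q) /\ open (ut @` V),
      (exists g : 'rV[R]_(n + r) -> 'rV[R]_(n + r),
          smooth_on (ut @` V) g /\ forall p, V p -> g (ut p) = p)
    & (forall p q, V p -> V q ->
         (lsubmx (ut p) = lsubmx (ut q) <-> lsubmx p = lsubmx q))].

(* A_I^J = d u^J / d ut^I = (inverse Jacobian) I J *)
Definition Amx (R : realType) (k : nat) (ut : 'rV[R]_k -> 'rV[R]_k) (p : 'rV[R]_k)
  : 'M[R]_k := invmx (jac ut p).

(* coordinate frame {d/dut^I} in u-components: d/dut^I = A_I^J d/du^J *)
Definition coord_frame (R : realType) (k : nat) (ut : 'rV[R]_k -> 'rV[R]_k)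
  (p : 'rV[R]_k) (I : 'I_k) : 'rV[R]_k := row I (Amx ut p).

Definition u_frame (R : realType) (k : nat) (p : 'rV[R]_k) (I : 'I_k) : 'rV[R]_k :=
  ebas R I.

Definition vertmx (R : realType) (n r : nat) : 'M[R]_(n + r) :=
  \matrix_(I, J) ((I == J) && (n <= I)%N)%:R.

(* a connection on W: an n-dimensional distribution (row space of H p)
   complementary to the vertical one *)
Definition is_connection (R : realType) (n r : nat) (Wc : set 'rV[R]_(n + r))
    (H : 'rV[R]_(n + r) -> 'M[R]_(n + r)) : Prop :=
  forall p, Wc p -> \rank (H p) = n /\ (H p + vertmx R n r :=: 1%:M)%MS.

(* X is the frame adapted to the frame F (whose e_a span the vertical
   distribution) on D: X_mu is the unique horizontal vector with
   pi_* X_mu = pi_* e_mu (pi_* = first n components), X_a = e_a *)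
Definition adapted_frame (R : realType) (n r : nat) (D : set 'rV[R]_(n + r))
    (H : 'rV[R]_(n + r) -> 'M[R]_(n + r))
    (F X : 'rV[R]_(n + r) -> 'I_(n + r) -> 'rV[R]_(n + r)) : Prop :=
  forall p, D p ->
    (forall mu : 'I_n, (X p (lshift r mu) <= H p)%MS /\
        lsubmx (X p (lshift r mu)) = lsubmx (F p (lshift r mu))) /\
    (forall a : 'I_r, X p (rshift n a) = F p (rshift n a)).

(* coefficients Gamma_mu^a: X_mu = e_mu + Gamma_mu^b e_b, i.e. the a-th
   fibre component of X_mu in the basis {e_I} *)
Definition coefs (R : realType) (n r : nat)
    (F X : 'rV[R]_(n + r) -> 'I_(n + r) -> 'rV[R]_(n + r))
    (p : 'rV[R]_(n + r)) (mu : 'I_n) (a : 'I_r) : R :=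
  (X p (lshift r mu) *m invmx (\matrix_(I < n + r) F p I)) 0 (rshift n a).

Definition normal_on (R : realType) (n r : nat) (U : set 'rV[R]_(n + r))
    (F X : 'rV[R]_(n + r) -> 'I_(n + r) -> 'rV[R]_(n + r)) : Prop :=
  forall p, U p -> forall mu a, coefs F X p mu a = 0.

Definition nce (R : realType) (n r : nat)
    (Gamma : 'rV[R]_(n + r) -> 'I_n -> 'I_r -> R)
    (ut : 'rV[R]_(n + r) -> 'rV[R]_(n + r)) (U : set 'rV[R]_(n + r)) : Prop :=
  forall p, U p -> forall (mu : 'I_n) (a : 'I_r),
    \sum_(b < r) jac ut p (rshift n b) (rshift n a) * Gamma p mu b
    + jac ut p (lshift r mu) (rshift n a) = 0.

(* Main.v *)
Require Import Defs.
From HB Require Import structures.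
From mathcomp Require Import all_boot all_order all_algebra.
From mathcomp Require Import all_classical all_reals all_analysis.
Import Order.TTheory GRing.Theory Num.Theory.
Import numFieldNormedType.Exports.
Local Open Scope classical_set_scope.
Local Open Scope ring_scope.

Lemma block_facts {R : realType} {n r : nat} {J : 'M[R]_(n + r)} :
  J \in unitmx -> dlsubmx J = 0 ->
  [/\ ulsubmx (invmx J) *m ulsubmx J = 1%:M, ulsubmx J *m ulsubmx (invmx J) = 1%:M
    & dlsubmx (invmx J) = 0].
Proof.
move=> hJ hdl.
have AJ := mulVmx hJ.
move: AJ; set A := invmx J => AJ.
move: AJ; rewrite -[A in A *m _]submxK -[J in _ *m J]submxK hdl mulmx_block.
rewrite (scalar_mx_block n r) => /eq_block_mx[h1 _ h3 _].
rewrite !mulmx0 !addr0 in h1 h3.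
have h2 := mulmx1C h1.
split => //.
by rewrite -[dlsubmx A]mulmx1 -h2 mulmxA h3 mul0mx.
Qed.

Lemma ebas_l (R : realType) (n r : nat) (mu : 'I_n) :
  lsubmx (ebas R (lshift r mu)) = delta_mx 0 mu.
Proof. by apply/matrixP => i j; rewrite !mxE eq_lshift. Qed.

Lemma frame_mx (R : realType) k (p : 'rV[R]_k) :
  \matrix_(I < k) u_frame p I = 1%:M.
Proof. by apply/matrixP => i j; rewrite !mxE eq_sym. Qed.

Lemma cframe_mx (R : realType) k (ut : 'rV[R]_k -> 'rV[R]_k) p :
  \matrix_(I < k) coord_frame ut p I = Amx ut p.
Proof. by apply/matrixP => i j; rewrite !mxE. Qed.

Lemma pointwise (R : realType) (n r : nat) (H : 'M[R]_(n + r))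
  (X Xt : 'rV[R]_(n + r) -> 'I_(n + r) -> 'rV[R]_(n + r)) ut p :
  \rank H = n ->
  (forall mu, (X p (lshift r mu) <= H)%MS /\
      lsubmx (X p (lshift r mu)) = lsubmx (ebas R (lshift r mu))) ->
  (forall a, X p (rshift n a) = ebas R (rshift n a)) ->
  (forall mu, (Xt p (lshift r mu) <= H)%MS /\
      lsubmx (Xt p (lshift r mu)) = lsubmx (coord_frame ut p (lshift r mu))) ->
  (forall a, Xt p (rshift n a) = coord_frame ut p (rshift n a)) ->
  jac ut p \in unitmx ->
  (forall a mu, jac ut p (rshift n a) (lshift r mu) = 0) ->
  ((forall mu a, coefs (coord_frame ut) Xt p mu a = 0) <->
   (forall (mu : 'I_n) (a : 'I_r),
    \sum_(b < r) jac ut p (rshift n b) (rshift n a) * coefs (@u_frame R (n + r)) X p mu b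
    + jac ut p (lshift r mu) (rshift n a) = 0)) /\
  ((forall mu a, coefs (coord_frame ut) Xt p mu a = 0) ->
       (forall mu : 'I_n,
          Xt p (lshift r mu)
            = \sum_(nu < n) Amx ut p (lshift r mu) (lshift r nu) *: X p (lshift r nu)
          /\ Xt p (lshift r mu) = coord_frame ut p (lshift r mu)) /\
       (forall a : 'I_r,
          Xt p (rshift n a)
            = \sum_(b < r) Amx ut p (rshift n a) (rshift n b) *: X p (rshift n b)
          /\ Xt p (rshift n a) = coord_frame ut p (rshift n a))).
Proof.
move=> hrank hXl hXr hXtl hXtr hJ hdl0.
set J := jac ut p.
have hdl : dlsubmx J = 0 by apply/matrixP => i j; rewrite [RHS]mxE -(hdl0 i j) !mxE.
have [h1 h2 hAdl] := block_facts hJ hdl.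
have hA : Amx ut p = invmx J by [].
set A := invmx J in h1 h2 hAdl hA.
set Aul := ulsubmx A in h1 h2.
set Jul := ulsubmx J in h1 h2.
pose G : 'M[R]_(n, r) := \matrix_(nu, b) X p (lshift r nu) 0 (rshift n b).
pose Y : 'M[R]_(n, n + r) := row_mx 1%:M G.
have hY : forall nu, row nu Y = X p (lshift r nu).
  move=> nu; apply/rowP => j; rewrite mxE.
  case: (split_ordP j) => k ->.
    rewrite row_mxEl !mxE.
    have := congr1 (fun M : 'rV_n => M 0 k) (hXl nu).2.
    rewrite ebas_l !mxE /= => ->.
    by rewrite eq_sym.
  by rewrite row_mxEr mxE.
have YH : (Y <= H)%MS by apply/row_subP => nu; rewrite hY; exact: (hXl nu).1.
have rY : \rank Y = n.
  apply/eqP; rewrite eqn_leq rank_leq_row /=.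
  have e : \rank (Y *m col_mx (1%:M : 'M[R]_n) (0 : 'M[R]_(r, n))) = n.
    by rewrite mul_row_col mulmx1 mulmx0 addr0 mxrank1.
  by rewrite -{1}e; exact: mxrankM_maxl.
have HY : (H <= Y)%MS.
  have := (mxrank_leqif_eq YH).2; rewrite rY hrank eqxx.
  by move/esym/andP => [].
have hXt : forall mu, Xt p (lshift r mu) = row mu Aul *m Y.
  move=> mu.
  have /submxP [c hc] := submx_trans (hXtl mu).1 HY.
  have lc : lsubmx (Xt p (lshift r mu)) = c.
    by rewrite hc mul_mx_row row_mxKl mulmx1.
  rewrite hc -lc (hXtl mu).2; congr (_ *m _).
  by apply/rowP => j; rewrite !mxE.
pose Ee := ursubmx J + G *m drsubmx J.
have YJ : Y *m J = row_mx Jul Ee.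
  rewrite -[J in Y *m J]submxK hdl mul_row_block.
  by rewrite !mul1mx mulmx0 addr0.
have hc1 : forall mu a, coefs (coord_frame ut) Xt p mu a = (Aul *m Ee) mu a.
  move=> mu a; rewrite /coefs cframe_mx hA invmxK hXt -mulmxA YJ mul_mx_row.
  by rewrite row_mxEr -row_mul mxE.
have hc2 : forall mu a,
    \sum_(b < r) J (rshift n b) (rshift n a) * coefs (@u_frame R (n + r)) X p mu b
    + J (lshift r mu) (rshift n a) = Ee mu a.
  move=> mu a; rewrite /coefs frame_mx invmx1.
  rewrite [RHS]mxE addrC; congr (_ + _); last by rewrite !mxE.
  rewrite [RHS]mxE; apply: eq_bigr => b _; rewrite mulmx1 mulrC; congr (_ * _).
    by rewrite mxE.
  by rewrite !mxE.
have Aunit : Aul \in unitmx by case: (mulmx1_unit h1).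
have eq1 : (forall mu a, coefs (coord_frame ut) Xt p mu a = 0) <-> Ee = 0.
  split=> [hn|E0]; last by move=> mu a; rewrite hc1 E0 mulmx0 mxE.
  have h0 : Aul *m Ee = 0 by apply/matrixP => i j; rewrite -hc1 hn mxE.
  by rewrite -(mulKmx Aunit Ee) h0 mulmx0.
have eq2 : (forall (mu : 'I_n) (a : 'I_r),
    \sum_(b < r) J (rshift n b) (rshift n a) * coefs (@u_frame R (n + r)) X p mu b
    + J (lshift r mu) (rshift n a) = 0) <-> Ee = 0.
  split=> [hn|E0 mu a]; last by rewrite hc2 E0 mxE.
  by apply/matrixP => i j; rewrite -hc2 hn mxE.
split; first by rewrite eq1 eq2.
move=> /eq1 E0; split.
  move=> mu.
  have hrow : Xt p (lshift r mu) = row (lshift r mu) A.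
    rewrite -[Xt _ _]mulmx1 -(mulmxV hJ) mulmxA hXt -(mulmxA _ Y) YJ E0.
    rewrite mul_mx_row mulmx0 -row_mul h1.
    have -> : row_mx (row mu 1%:M) (0 : 'rV[R]_r) = row (lshift r mu) (1%:M : 'M[R]_(n + r)).
      apply/rowP => j; case: (split_ordP j) => k ->.
        by rewrite row_mxEl !mxE eq_lshift.
      by rewrite row_mxEr !mxE eq_lrshift.
    by rewrite -row_mul mul1mx.
  split; last by rewrite hrow.
  rewrite hXt mulmx_sum_row; apply: eq_bigr => nu _; rewrite hY hA; congr (_ *: _).
  by rewrite !mxE.
move=> a; rewrite hXtr; split => //.
rewrite /coord_frame; apply/rowP => j; rewrite summxE.
case: (split_ordP j) => k ->.
  rewrite big1; last by move=> b _; rewrite hXr !mxE eq_lrshift mulr0.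
  have := congr1 (fun M : 'M[R]_(r, n) => M a k) hAdl.
  by rewrite !mxE.
rewrite (bigD1 k) //= big1 ?addr0; last first.
  by move=> b /negbTE nb; rewrite hXr !mxE eq_rshift eq_sym nb mulr0.
by rewrite hXr !mxE !eqxx mulr1.
Qed.
Lemma jac_jacobian (R : realType) k (f : 'rV[R]_k -> 'rV[R]_k) p :
  differentiable f p -> jac f p = jacobian f p.
Proof.
move=> df; apply/matrixP => i j; rewrite mxE deriveEjacobian //.
by rewrite /ebas -rowE mxE.
Qed.

Lemma jac_unit (R : realType) (n r : nat) (V : set 'rV[R]_(n + r)) ut p :
  bundle_coords V ut -> V p -> jac ut p \in unitmx.
Proof.
case=> oV sut _ [g [sg gK]] _ Vp.
have dut : differentiable ut p by exact: (sut [::] p Vp).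
have dg : differentiable g (ut p) by apply: (sg [::]); exists p.
have key : forall u, 'd g (ut p) ('d ut p u) = u.
  move=> u.
  have nid : \forall q \near p, (g \o ut) q = id q.
    have : \forall q \near p, V q by apply: open_nbhs_nbhs; split.
    by apply: filterS => q Vq /=; rewrite gK.
  rewrite -[RHS](derive_id p u).
  rewrite -(near_eq_derive _ nid).
  rewrite deriveE.
  2: by apply: differentiable_comp.
  exact: (esym (congr1 (fun f => f u) (diff_comp dut dg))).
rewrite jac_jacobian //.
pose J := jacobian ut p.
pose M := jacobian g (ut p).
have E1 : forall v, v *m J = 'd ut p v by move=> v; exact: mul_rV_lin1.
have E2 : forall v, v *m M = 'd g (ut p) v by move=> v; exact: mul_rV_lin1.
have J1 : (J *m M = 1%:M).
  apply/row_matrixP => i. 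
  rewrite !rowE.
  rewrite mulmxA E1 E2 key mulmx1.
  done.
have [U1 _] := mulmx1_unit J1.
exact: U1.
Qed.
Lemma jac_dl (R : realType) (n r : nat) (V : set 'rV[R]_(n + r)) ut p a mu :
  bundle_coords V ut -> V p -> jac ut p (rshift n a) (lshift r mu) = 0.
Proof.
case=> oV sut _ _ hl Vp.
have dut : differentiable ut p by exact: (sut [::] p Vp).
set v := ebas R (rshift n a).
have lv : lsubmx v = 0.
  by apply/matrixP => i j; rewrite !mxE eq_lrshift andbF.
have -> : jac ut p (rshift n a) (lshift r mu) = lsubmx ('D_v ut p) 0 mu.
  by rewrite mxE [in RHS]mxE.
have dl : differentiable (lsubmx : 'rV[R]_(n + r) -> 'rV[R]_n) (ut p).
  exact: differentiable_lsubmx.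
have dc : differentiable (lsubmx \o ut) p by exact: differentiable_comp.
have E : lsubmx ('D_v ut p) = 'D_v (lsubmx \o ut) p.
  rewrite (deriveE _ dc) (deriveE _ dut).
  have H1 := diff_comp dut dl.
  have H2 := congr1 (fun f => f v) H1.
  rewrite H2.
  have H3 := diff_lin (ut p) (@continuous_lsubmx R 1 n r).
  exact: (esym (congr1 (fun f => f ('d ut p v)) H3)).
rewrite E.
suff -> : 'D_v (lsubmx \o ut) p = 0 by rewrite mxE.
rewrite /derive; apply: lim_near_cst; first exact: norm_hausdorff.
have nV : \forall q \near p, V q by apply: open_nbhs_nbhs; split.
have hV : \forall h \near (0:R), V (h *: v + p).
  apply: (@near0Z R _ v (fun x => V (x + p))).
  move: nV; rewrite (near_shift 0 p) /=.
  by apply: filterS => z /=; rewrite subr0 addrC.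
have : \forall h \near (0:R)^', V (h *: v + p) by exact: cvg_within hV.
move=> H0.
near=> h.
have Vh : V (h *: v + p) by near: h.
rewrite /=.
suff -> : lsubmx (ut (h *: v + p)) = lsubmx (ut p) by rewrite subrr scaler0.
by apply/hl => //; rewrite linearD linearZ /= lv scaler0 add0r.
Unshelve. all: by end_near.
Qed.
Theorem proposition5p1 (R : realType) (n r : nat)
    (Wc : set 'rV[R]_(n + r)) (H : 'rV[R]_(n + r) -> 'M[R]_(n + r))
    (X : 'rV[R]_(n + r) -> 'I_(n + r) -> 'rV[R]_(n + r))
    (V U : set 'rV[R]_(n + r)) :
  open Wc ->
  is_connection Wc H ->
  adapted_frame Wc H (@u_frame R (n + r)) X ->
  (forall I, smooth_on Wc (fun p => X p I)) ->
  open V -> V `<=` Wc -> U `<=` V ->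
  (exists ut0, bundle_coords V ut0 /\ nce (coefs (@u_frame R (n + r)) X) ut0 U) ->
  forall (ut : 'rV[R]_(n + r) -> 'rV[R]_(n + r))
         (Xt : 'rV[R]_(n + r) -> 'I_(n + r) -> 'rV[R]_(n + r)),
    bundle_coords V ut ->
    adapted_frame V H (coord_frame ut) Xt ->
    (normal_on U (coord_frame ut) Xt <-> nce (coefs (@u_frame R (n + r)) X) ut U) /\
    (normal_on U (coord_frame ut) Xt ->
     forall p, U p ->
       (forall mu : 'I_n,
          Xt p (lshift r mu)
            = \sum_(nu < n) Amx ut p (lshift r mu) (lshift r nu) *: X p (lshift r nu)
          /\ Xt p (lshift r mu) = coord_frame ut p (lshift r mu)) /\
       (forall a : 'I_r,
          Xt p (rshift n a)
            = \sum_(b < r) Amx ut p (rshift n a) (rshift n b) *: X p (rshift n b)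
          /\ Xt p (rshift n a) = coord_frame ut p (rshift n a))).
Proof.
move=> oW hconn hadX _ oV VW UV _ ut Xt bc hadXt.
have pt := fun p (Up : U p) =>
  let Vp := UV p Up in let Wp := VW p Vp in
  @pointwise R n r (H p) X Xt ut p (hconn p Wp).1 (hadX p Wp).1 (hadX p Wp).2
    (hadXt p Vp).1 (hadXt p Vp).2 (@jac_unit R n r V ut p bc Vp)
    (fun a mu => @jac_dl R n r V ut p a mu bc Vp).
split; first split.
- by move=> hn p Up; exact: ((pt p Up).1.1 (hn p Up)).
- by move=> hn p Up; exact: ((pt p Up).1.2 (hn p Up)).
- by move=> hn p Up; exact: ((pt p Up).2 (hn p Up)).
Qed.
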